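(* Let $P$ be a finite near-simplicial poset of rank $d$ with $f$-vector $(f_{-1},f_0,\dots,f_d)$. Then $$\mathcal{M}_P(z)=g^P_d(z)+\sum_{r=-1}^{d-1}(1-z)^{r+1}f_r.$$
   Context: A ranked poset is a poset with a rank function $|\cdot|$ such that covering relations increase rank by one and minimal elements have rank $-1$; $f_r$ is the number of elements of rank $r$; $P_{\le i}=\{p:|p|\le i\}$. A simplicial poset is a ranked poset in which every closed interval $[p,q]$ ($p\le q$) is isomorphic to a Boolean lattice (the subsets of $\{1,\dots,n\}$ under inclusion) for some $n$. A near-simplicial poset of rank $d$ is a ranked poset $P$ such that $P_{\le d-1}$ is a disjoint union (elements of different components incomparable) of simplicial posets each having a unique minimum element. The Möbius function $\mu$ is $\mu[p,p]=1$, $\mu[p,q]=-\sum_{p\le s<q}\mu[p,s]$ for $p<q$, $0$ if $p\not\le q$; $\mu_z[p,q]=\mu[p,q]z^{|q|-|p|}$; $\mathcal{M}_P(z)=\sum_{p\le q\in P}\mu_z[p,q]$; $g^P_d(z)=\sum_{p\le q,\ |p|\le d\le |q|}\mu_z[p,q]$. *)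

(* Defs.v *)
From HB Require Import structures.
From mathcomp Require Import all_boot all_order all_algebra.
Set Implicit Arguments. Unset Strict Implicit. Unset Printing Implicit Defensive.
Import Order.TTheory GRing.Theory Num.Theory.
Local Open Scope ring_scope.

Section PosetDefs.
Variables (P : finType) (le : rel P).

Definition is_partial_order : Prop :=
  [/\ reflexive le, antisymmetric le & transitive le].

Definition ltp (p q : P) : bool := (p != q) && le p q.

Definition covers (p q : P) : bool :=
  ltp p q && ~~ [exists s, ltp p s && ltp s q].

Definition minimal (p : P) : Prop := forall s, le s p -> s = p.

Definition is_rank_function (rk : P -> int) : Prop :=
  (forall p q, covers p q -> rk q = rk p + 1) /\
  (forall p, minimal p -> rk p = -1).

(* the subposet B (with the induced order) has closed interval [p,q] isomorphic
   to a Boolean lattice (subsets of {0..n-1} under inclusion) *)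
Definition interval_in (B : {set P}) (p q : P) : {set P} :=
  [set s in B | le p s && le s q].

Definition boolean_interval (B : {set P}) (p q : P) : Prop :=
  exists (n : nat) (f : {set 'I_n} -> P),
    [/\ (forall A, f A \in interval_in B p q),
        (forall s, s \in interval_in B p q -> exists A, f A = s) &
        (forall A1 A2, le (f A1) (f A2) = (A1 \subset A2))].

Definition simplicial_on (B : {set P}) : Prop :=
  forall p q, p \in B -> q \in B -> le p q -> boolean_interval B p q.

Definition has_unique_minimum_on (B : {set P}) : Prop :=
  exists2 m, m \in B & forall s, s \in B -> le m s.

Definition near_simplicial (rk : P -> int) (d : int) : Prop :=
  [/\ is_partial_order, is_rank_function rk,
      (forall p, rk p <= d), (exists p, rk p = d) &
      exists Pi : {set {set P}},
        [/\ partition Pi [set p | rk p <= d - 1],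
            (forall B C, B \in Pi -> C \in Pi -> B != C ->
               forall x y, x \in B -> y \in C -> ~~ le x y) &
            (forall B, B \in Pi -> simplicial_on B /\ has_unique_minimum_on B)]].

(* Moebius function, by recursion with fuel #|P| (enough: chains have < #|P| steps) *)
Fixpoint mobius_fuel (k : nat) (p q : P) : int :=
  if p == q then 1 else
  if le p q then
    match k with
    | 0 => 0
    | k'.+1 => - \sum_(s | le p s && ltp s q) mobius_fuel k' p s
    end
  else 0.

Definition mobius (p q : P) : int := mobius_fuel #|P| p q.

Definition mobius_z (rk : P -> int) (p q : P) : {poly int} :=
  (mobius p q)%:P * 'X^(absz (rk q - rk p)).

Definition M_poly (rk : P -> int) : {poly int} :=
  \sum_(p : P) \sum_(q : P | le p q) mobius_z rk p q.

Definition g_poly (rk : P -> int) (d : int) : {poly int} :=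
  \sum_(p : P) \sum_(q : P | [&& le p q, rk p <= d & d <= rk q]) mobius_z rk p q.

Definition fvec (rk : P -> int) (r : int) : nat := #|[set p | rk p == r]|.

End PosetDefs.

(* Main.v *)
Require Import Defs.
From HB Require Import structures.
From mathcomp Require Import all_boot all_order all_algebra zify ring.
Set Implicit Arguments. Unset Strict Implicit. Unset Printing Implicit Defensive.
Import Order.TTheory GRing.Theory Num.Theory.
Local Open Scope ring_scope.

Lemma sum_subsets (R : comNzRingType) n (c : R) :
  \sum_(J : {set 'I_n}) c ^+ #|~: J| = (1 + c) ^+ n.
Proof.
have -> : (1 + c) ^+ n = \prod_(i < n) (1 + c).
  by rewrite prodr_const card_ord.
rewrite (@bigA_distr R 0 1 _ _ _ (fun _ => 1) (fun _ => c)).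
apply: eq_bigr => J _.
rewrite (bigID (mem J)) /= big1 ?mul1r; last by move=> i ->.
rewrite -prodr_const; apply: eq_big => i //=.
  by rewrite in_setC.
by rewrite in_setC =>/negbTE ->.
Qed.

Lemma alt_sum (n : nat) (A C : {set 'I_n}) : A \subset C -> A != C ->
  \sum_(D : {set 'I_n} | (A \subset D) && (D \subset C)) (-1) ^+ #|D :\: A| = 0 :> int.
Proof.
move=> sAC neAC.
have : A \proper C by rewrite properEneq neAC sAC.
case/properP=> _ [x xC xA].
pose t (D : {set 'I_n}) := if x \in D then D :\ x else x |: D.
have tK : involutive t.
  move=> D; rewrite /t; case: (boolP (x \in D)) => xD.
    rewrite setD11 setD1K //.
  rewrite setU11 setU1K //.
set S := (X in X = 0).
have : S = - S.
  rewrite {1}/S (reindex_inj (inv_inj tK)) /S -sumrN; apply: eq_big => D.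
    rewrite /t; case: (boolP (x \in D)) => xD.
      rewrite subsetD1 (negbTE xA) andbT; congr andb.
      by rewrite -{2}(setD1K xD) subUset sub1set xC.
    rewrite subUset sub1set xC /=; congr andb.
    apply/idP/idP => H; apply/subsetP => y yA; [|by rewrite !inE (subsetP H _ yA) orbT].
    move: (subsetP H y yA); rewrite !inE; case/orP => // /eqP eyx.
    by rewrite -eyx yA in xA.
  move=> _; rewrite /t; case: (boolP (x \in D)) => xD.
    rewrite (cardsD1 x (D :\: A)) inE xD xA /=.
    by rewrite !setDDl setUC add1n exprS mulN1r opprK.
  have -> : (x |: D) :\: A = x |: (D :\: A).
    by rewrite setDUl (setDidPl _) // disjoints1.
  rewrite cardsU1 inE xA (negbTE xD) /=. by rewrite exprD expr1 mulN1r.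
lia.
Qed.
Lemma sub_card_diff (T : finType) (A D : {set T}) : A \subset D -> #|D :\: A| = (#|D| - #|A|)%N.
Proof. by move=> sAD; rewrite cardsD (setIidPr sAD). Qed.

Lemma card_set_ord n : #|{set 'I_n}| = (2 ^ n)%N.
Proof. by rewrite -cardsT -powersetT card_powerset cardsT card_ord. Qed.

Lemma reindex_on_pick (T : finType) (R : nmodType) n (f : {set 'I_n} -> T) (Q : pred T) (F : T -> R) :
  injective f -> (forall s, Q s -> exists A, f A = s) ->
  \sum_(s | Q s) F s = \sum_(A | Q (f A)) F (f A).
Proof.
move=> finj fs.
apply: (reindex f).
exists (fun s => odflt set0 [pick A | f A == s]).
  move=> A _ /=; case: pickP => [B /eqP /finj -> //|H].
  by have := H A; rewrite eqxx.
move=> s; rewrite inE => Qs /=; case: pickP => [B /eqP -> //|H].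
by case: (fs s Qs) => A eA; have := H A; rewrite eA eqxx.
Qed.

Section Poset.
Variables (P : finType) (le : rel P) (rk : P -> int).
Hypothesis refl : reflexive le.
Hypothesis asym : antisymmetric le.
Hypothesis trans : transitive le.
Hypothesis rkcov : forall p q, covers le p q -> rk q = rk p + 1.
Hypothesis rkmin : forall p, minimal le p -> rk p = -1.

Lemma rk_mono_aux k : forall p q, (#|[set s | le p s && le s q]| <= k)%N -> le p q -> rk p <= rk q.
Proof.
elim: k => [|k IH] p q.
  move=> Hc lepq; have : p \in [set s | le p s && le s q] by rewrite inE refl lepq.
  by move=> H; rewrite leqn0 cards_eq0 in Hc; rewrite (eqP Hc) inE in H.
move=> Hc lepq.
case: (eqVneq p q) => [-> //|npq].
case Hcov: (covers le p q); first by rewrite (rkcov Hcov) lerDl.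
have : [exists s, ltp le p s && ltp le s q].
  by move: Hcov; rewrite /covers /ltp npq lepq /= => /negbT; rewrite negbK.
case/existsP=> s /andP[/andP[nps leps] /andP[nsq lesq]].
have sub1 : [set t | le p t && le t s] \proper [set t | le p t && le t q].
  apply/properP; split.
    by apply/subsetP=> t; rewrite !inE => /andP[-> lets]; rewrite (trans lets lesq).
  exists q; first by rewrite inE lepq refl.
  rewrite inE lepq /=; apply/negP=> leqs.
  by move: nsq; rewrite (asym (introT andP (conj lesq leqs))) eqxx.
have sub2 : [set t | le s t && le t q] \proper [set t | le p t && le t q].
  apply/properP; split.
    by apply/subsetP=> t; rewrite !inE => /andP[lest ->]; rewrite (trans leps lest).
  exists p; first by rewrite inE lepq refl.
  rewrite inE lepq andbT; apply/negP=> lesp.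
  by move: nps; rewrite (asym (introT andP (conj leps lesp))) eqxx.
apply: (@le_trans _ _ (rk s)).
  apply: IH leps; rewrite -ltnS; apply: leq_trans Hc; exact: proper_card.
apply: IH lesq; rewrite -ltnS; apply: leq_trans Hc; exact: proper_card.
Qed.

Lemma rk_mono p q : le p q -> rk p <= rk q.
Proof. exact: rk_mono_aux (leqnn _). Qed.

Section Bool.
Variables (n : nat) (f : {set 'I_n} -> P) (q : P).
Hypothesis fle : forall A1 A2, le (f A1) (f A2) = (A1 \subset A2).
Hypothesis fsurj : forall s, le s q -> exists A, f A = s.
Hypothesis fT : f setT = q.

Lemma finj : injective f.
Proof. by move=> A1 A2 e; apply/eqP; rewrite eqEsubset -!fle e refl. Qed.

Lemma fleq A : le (f A) q.
Proof. by rewrite -fT fle subsetT. Qed.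

Lemma f0min : minimal le (f set0).
Proof.
move=> s les.
have lesq : le s q by rewrite (trans les) // fleq.
case: (fsurj lesq) => A eA; rewrite -eA in les *.
by move: les; rewrite fle subset0 => /eqP ->.
Qed.

Lemma frk A : rk (f A) = (#|A|%:Z - 1)%R.
Proof.
have [k cA0] : exists k, #|A| = k by eexists. elim: k A cA0 => [|k IH] A cA.
  move/eqP: (cA); rewrite cards_eq0 => /eqP eA. rewrite cA (rkmin _) //. rewrite eA. exact: f0min.
have : (0 < #|A|)%N by rewrite cA.
case/card_gt0P => x xA.
have cA' : #|A :\ x| = k by move: cA; rewrite (cardsD1 x A) xA add1n => -[].
have cov : covers le (f (A :\ x)) (f A).
  rewrite /covers /ltp fle subD1set andbT; apply/andP; split.
    apply/negP=> /eqP /finj eAx.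
    by move: (setD11 x A); rewrite eAx xA.
  apply/negP=> /existsP [s /andP[/andP[ns1 l1] /andP[ns2 l2]]].
  have : le s q by rewrite (trans l2) // fleq.
  case/fsurj => C eC; rewrite -eC in ns1 l1 ns2 l2.
  rewrite fle in l1; rewrite fle in l2.
  have p1 : (A :\ x) \proper C by rewrite properEneq l1 andbT; apply: contra ns1 => /eqP ->.
  have p2 : C \proper A by rewrite properEneq l2 andbT; apply: contra ns2 => /eqP ->.
  have := proper_card p1; have := proper_card p2; rewrite cA cA'; lia.
rewrite (rkcov cov) IH // cA; lia.
Qed.

Lemma fmob_fuel k (A C : {set 'I_n}) : A \subset C -> (#|C :\: A| <= k)%N ->
  mobius_fuel le k (f A) (f C) = (-1) ^+ #|C :\: A|.
Proof.
elim: k A C => [|k IH] A C sAC Hk /=.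
  have eAC : A = C.
    apply/eqP; rewrite eqEsubset sAC -setD_eq0 -cards_eq0; lia.
  by rewrite eAC eqxx setDv cards0.
case: (eqVneq A C) => [->|neAC]; first by rewrite eqxx setDv cards0.
rewrite (inj_eq finj) (negbTE neAC) fle sAC.
rewrite (reindex_on_pick (f := f)); last first.
  by move=> s /andP[_ /andP[_ lesC]]; apply: fsurj; rewrite (trans lesC) // fleq.
  exact: finj.
have E : \sum_(D : {set 'I_n} | le (f A) (f D) && ltp le (f D) (f C)) mobius_fuel le k (f A) (f D)
       = \sum_(D : {set 'I_n} | ((A \subset D) && (D \subset C)) && (D != C)) (-1) ^+ #|D :\: A|.
  apply: eq_big => [D|D].
    rewrite /ltp !fle (inj_eq finj). by case: (A \subset D); case: (D != C); case: (D \subset C).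
  rewrite /ltp !fle (inj_eq finj) => /and3P[sAD neDC sDC]; apply: IH => //.
  have pDC : D \proper C by rewrite properEneq neDC sDC.
  have := proper_card pDC; have := subset_leq_card sAD.
  move: Hk; rewrite !sub_card_diff // ?(subset_trans sAD sDC) //; lia.
rewrite E.
have := alt_sum sAC neAC.
rewrite (bigD1 C) /=; last by rewrite sAC subxx.
move/eqP; rewrite addr_eq0 => /eqP ->.
done.
Qed.

Lemma fmob (A C : {set 'I_n}) : A \subset C -> mobius le (f A) (f C) = (-1) ^+ #|C :\: A|.
Proof.
move=> sAC; apply: fmob_fuel => //.
have h1 : (#|C :\: A| <= n)%N by rewrite (leq_trans (max_card _)) // card_ord.
have h2 : (2 ^ n <= #|P|)%N by rewrite -card_set_ord; apply: leq_card; exact: finj.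
have h3 := ltn_expl n (isT : (1 < 2)%N).
lia.
Qed.

Lemma flocal : \sum_(p | le p q) mobius_z le rk p q = (1 - 'X) ^+ n /\ rk q = n%:Z - 1.
Proof.
split; last by rewrite -fT frk cardsT card_ord.
rewrite (reindex_on_pick (f := f)); [|exact: finj|by move=> s /fsurj].
rewrite -(sum_subsets n (- 'X : {poly int})).
apply: eq_big => [A|A _]; first by rewrite fleq.
rewrite /mobius_z -fT fmob ?subsetT // !frk cardsT card_ord setTD.
have -> : `|(n%:Z - 1 - (#|A|%:Z - 1))%R|%N = #|~: A|.
  have := cardsC A; rewrite card_ord => h; lia.
by rewrite [RHS]exprNn polyC_exp polyCN.
Qed.

End Bool.

End Poset.

Theorem mainTheorem14 (P : finType) (le : rel P) (rk : P -> int) (d : int) :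
  near_simplicial le rk d ->
  M_poly le rk =
    g_poly le rk d +
    \sum_(i < absz (d + 1)) (1 - 'X) ^+ i * ((fvec rk (i%:Z - 1))%:R)%:P.
Proof.
move=> [[refl asym trans] [rkcov rkmin] rkd _ [Pi [partPi disj blocks]]].
move/and3P: partPi => [/eqP covE _ _].
have loc : forall q, rk q < d ->
    \sum_(p | le p q) mobius_z le rk p q = (1 - 'X) ^+ absz (rk q + 1) /\ 0 <= rk q + 1.
  move=> q rq.
  have qS : q \in cover Pi by rewrite covE inE; lia.
  case/bigcupP: qS => B BPi qB.
  case: (blocks B BPi) => simpB [m mB minB].
  case: (simpB m q mB qB (minB q qB)) => n [f [fin fsurj0 fle]].
  have below : forall s, le s q -> s \in B.
    move=> s lesq.
    have sS : s \in cover Pi.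
      by rewrite covE inE; have := rk_mono refl asym trans rkcov lesq; lia.
    case/bigcupP: sS => C CPi sC.
    case: (eqVneq C B) => [eCB|neCB]; first by subst.
    by have := disj C B CPi BPi neCB s q sC qB; rewrite lesq.
  have fsurj : forall s, le s q -> exists A, f A = s.
    by move=> s lesq; apply: fsurj0; rewrite inE below // minB ?below // lesq.
  have fT : f setT = q.
    have [A eA] : exists A, f A = q by apply: fsurj0; rewrite inE qB minB // refl.
    move: (fin setT); rewrite inE => /andP[_ /andP[_ h]].
    by move: h; rewrite -eA fle subTset => /eqP ->.
  have [H1 H2] := flocal refl trans rkcov rkmin fle fsurj fT.
  rewrite H1 H2; split; last lia.
  congr (_ ^+ _); lia.
rewrite /M_poly /g_poly.
have step1 : forall p, \sum_(q | le p q) mobius_z le rk p q =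
   \sum_(q | [&& le p q, rk p <= d & d <= rk q]) mobius_z le rk p q +
   \sum_(q | le p q && (rk q < d)) mobius_z le rk p q.
  move=> p; rewrite (bigID (fun q => d <= rk q)) /=; congr (_ + _).
    by apply: eq_bigl => q; rewrite rkd.
  by apply: eq_bigl => q; rewrite -ltNge.
rewrite (eq_bigr _ (fun p _ => step1 p)) big_split /=; congr (_ + _).
rewrite (exchange_big_dep (fun q => rk q < d)) /=; last by move=> p q _ /andP[].
rewrite big_mkcond /=.
have -> : \sum_(i < `|d + 1|) (1 - 'X) ^+ i * ((fvec rk (i%:Z - 1))%:R)%:P =
   \sum_(i < `|d + 1|) \sum_(q | rk q == i%:Z - 1) (1 - 'X : {poly int}) ^+ i.
  apply: eq_bigr => i _; rewrite /fvec polyC_natr mulr_natr -sumr_const.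
  by apply: eq_bigl => q; rewrite inE.
rewrite (exchange_big_dep predT) //=.
apply: eq_bigr => q _.
case: ifP => rq.
  have -> : \sum_(i | le i q && (rk q < d)) mobius_z le rk i q = \sum_(i | le i q) mobius_z le rk i q.
    by apply: eq_bigl => p; rewrite rq andbT.
  rewrite (loc q rq).1.
  have h0 := (loc q rq).2.
  have lt0 : (`|(rk q + 1)%R| < `|(d + 1)%R|)%N by lia.
  rewrite (big_pred1 (Ordinal lt0)) //= => i /=.
  apply/eqP/eqP => [h|h]; first by apply: val_inj => /=; lia.
  by rewrite h /=; lia.
rewrite big_pred0 // => i; apply/eqP => h.
have := ltn_ord i; have := rkd q; move: rq => /negbT; rewrite -leNgt; lia.
Qed.
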